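(* Let $n\ge 1$, let $\delta_t>0$, and let $\mathbf{K}\in\mathbb{R}^{n\times n}$ be a real symmetric matrix all of whose eigenvalues $\lambda_{\mathbf{K},1},\dots,\lambda_{\mathbf{K},n}$ are strictly positive; let $\overline{\lambda}_{\mathbf{K}}=\max_j \lambda_{\mathbf{K},j}$. Let $\mathbf{B}\in\mathbb{R}^n$ and let $\alpha,\beta\in\mathbb{R}$. Consider the discrete-time linear system (for $\mathbf{Y}[m]\in\mathbb{R}^n$, scalar input $y_d[m]$) $$\mathbf{Y}[m+1]=\mathbf{Y}[m]-\alpha\beta\delta_t\mathbf{K}\mathbf{Y}[m]+\alpha\beta\delta_t\mathbf{B}\,y_d[m]+(\mathbf{I}-\beta\mathbf{K})\big(\mathbf{Y}[m]-\mathbf{Y}[m-1]\big).$$ Then this system is (asymptotically) stable, i.e. every root $z$ of $$\det\Big(\mathbf{I}z^2-\big(\mathbf{I}-\alpha\beta\delta_t\mathbf{K}+(\mathbf{I}-\beta\mathbf{K})\big)z+(\mathbf{I}-\beta\mathbf{K})\Big)=0$$ satisfies $|z|<1$ (equivalently, for every eigenvalue $\lambda=\lambda_{\mathbf{K},k}$, both roots of $z^2-\big(1-\alpha\beta\delta_t\lambda+(1-\beta\lambda)\big)z+(1-\beta\lambda)=0$ lie in the open unit disk), if and only if $$\text{(i)}\ \ \alpha>0\qquad\text{and}\qquad \text{(ii)}\ \ 0<\beta<\frac{4}{\overline{\lambda}_{\mathbf{K}}\,(\alpha\delta_t+2)}.$$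
   Context: In the paper, $\mathbf{K}$ is the pinned Laplacian of a network of $n$ robots attached to a flexible object: $\mathbf{K}_{k,k}=\hat{k}_{k,d}+\sum_{m}\hat{k}_{k,m}$ and $\mathbf{K}_{k,j}=-\hat{k}_{k,j}$ for $k\neq j$, where $\hat{k}_{k,j}=\hat{k}_{j,k}\ge 0$ are effective stiffnesses (with $\hat{k}_{j,j}=0$) and $\hat{k}_{k,d}\ge0$ is nonzero only for leader robots; it is assumed to have real strictly positive eigenvalues. $\mathbf{B}$ has entries $B_k=\hat{k}_{k,d}$, $\mathbf{Y}$ is the vector of robot positions, $y_d$ the desired position, $\delta_t>0$ the sampling period, and $\alpha,\beta$ are the gains of the delayed-self-reinforcement update. Stability refers to the homogeneous recurrence (input $y_d$ irrelevant), i.e. all characteristic roots strictly inside the unit circle. *)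

(* Defs.v *)
From HB Require Import structures.
From mathcomp Require Import all_boot all_order all_algebra.
From mathcomp Require Import complex.
Set Implicit Arguments. Unset Strict Implicit. Unset Printing Implicit Defensive.
Import Order.TTheory GRing.Theory Num.Theory.
Local Open Scope ring_scope.

Definition dsr_charmx (R : rcfType) (n : nat) (K : 'M[R]_n)
  (alpha beta dt : R) (z : R[i]) : 'M[R[i]]_n :=
  let Kc := map_mx (real_complex R) K in
  (z ^+ 2)%:M
  - z *: (1%:M - (real_complex R (alpha * beta * dt)) *: Kc + (1%:M - (real_complex R beta) *: Kc))
  + (1%:M - (real_complex R beta) *: Kc).

Definition dsr_stable (R : rcfType) (n : nat) (K : 'M[R]_n)
  (alpha beta dt : R) : Prop :=
  forall z : R[i], \det (dsr_charmx K alpha beta dt z) = 0 -> `|z| < 1.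

(* Main.v *)
Require Import Defs.
From HB Require Import structures.
From mathcomp Require Import all_boot all_order all_algebra.
From mathcomp Require Import complex.
From mathcomp Require Import ring lra.
Import Order.TTheory GRing.Theory Num.Theory.
Local Open Scope ring_scope.
Section S.
Variable R : rcfType.
Lemma norm_lt1 (z : R[i]) : (`|z| < 1) = ((complex.Re z)^+2 + (complex.Im z)^+2 < 1).
Proof.
rewrite normc_def ltcE /= eqxx /=.
have h : 0 <= (complex.Re z)^+2 + (complex.Im z)^+2.
  by apply: addr_ge0; apply: sqr_ge0.
idtac.
by rewrite -{1}sqrtr1 ltr_sqrt ?ltr01.
Qed.
Lemma root_parts (x y p q : R) :
  (Complex x y)^+2 + real_complex R p * (Complex x y) + real_complex R q = 0 ->
  x^+2 - y^+2 + p * x + q = 0 /\ 2 * x * y + p * y = 0.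
Proof.
move=> /eqP; rewrite eq_complex /= => /andP[/eqP h1 /eqP h2]; split.
  by rewrite -h1; ring.
by rewrite -h2; ring.
Qed.
Lemma jury_suff (p q : R) (z : R[i]) : q < 1 -> 0 < 1 + p + q -> 0 < 1 - p + q ->
  z^+2 + real_complex R p * z + real_complex R q = 0 -> `|z| < 1.
Proof.
move=> hq h1 h2; case: z => x y /root_parts [e1 e2]; rewrite norm_lt1 /=.
have [y0|yn0] := eqVneq y 0.
  rewrite y0 in e1 *.
  have e1' : x^+2 + p * x + q = 0 by rewrite -e1; ring.
  clear e1.
  have hx1 : x < 1.
    rewrite ltNge; apply/negP => hx.
    have : 0 <= (2 + p) * (x - 1) by apply: mulr_ge0; lra.
    have : 0 <= (x - 1)^+2 by apply: sqr_ge0.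
    nra.
  have hx2 : -1 < x.
    rewrite ltNge; apply/negP => hx.
    have : 0 <= (2 - p) * (-1 - x) by apply: mulr_ge0; lra.
    have : 0 <= (x + 1)^+2 by apply: sqr_ge0.
    nra.
  nra.
have hp : 2 * x + p = 0.
  have : (2 * x + p) * y = 0 by rewrite -e2; ring.
  by move/eqP; rewrite mulf_eq0 (negPf yn0) orbF => /eqP.
have hp' : p = - (2 * x) by lra.
rewrite hp' in e1; nra.
Qed.
Lemma root_of_parts (x y p q : R) :
  x^+2 - y^+2 + p * x + q = 0 -> 2 * x * y + p * y = 0 ->
  (Complex x y)^+2 + real_complex R p * (Complex x y) + real_complex R q = 0.
Proof.
move=> h1 h2; apply/eqP; rewrite eq_complex /=; apply/andP; split; apply/eqP.
  by rewrite -[RHS]h1; ring.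
by rewrite -[RHS]h2; ring.
Qed.
Lemma sq_lt1 (r : R) : r^+2 < 1 -> -1 < r /\ r < 1.
Proof.
move=> h; split; rewrite ltNge; apply/negP => hr; nra.
Qed.
Lemma jury_nec (p q : R) :
  (forall z : R[i], z^+2 + real_complex R p * z + real_complex R q = 0 -> `|z| < 1) ->
  q < 1 /\ 0 < 1 + p + q /\ 0 < 1 - p + q.
Proof.
move=> H.
have [hD|hD] := lerP 0 (p^+2 - 4 * q).
  set s := Num.sqrt (p^+2 - 4 * q).
  have hs : s^+2 = p^+2 - 4 * q by rewrite sqr_sqrtr.
  have hr : forall r, r^+2 + p * r + q = 0 -> -1 < r /\ r < 1.
    move=> r hr; apply: sq_lt1.
    have := H (Complex r 0); rewrite norm_lt1 /=.
    have -> : (0:R)^+2 = 0 by rewrite expr0n.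
    rewrite addr0; apply; apply: root_of_parts; [rewrite -[RHS]hr; ring | ring].
  have [a1 a2] : -1 < (- p + s) / 2 /\ (- p + s) / 2 < 1.
    apply: hr; have -> : ((- p + s) / 2)^+2 + p * ((- p + s) / 2) + q = (s^+2 - (p^+2 - 4 * q))/4 by field.
    by rewrite hs subrr mul0r.
  have [b1 b2] : -1 < (- p - s) / 2 /\ (- p - s) / 2 < 1.
    apply: hr; have -> : ((- p - s) / 2)^+2 + p * ((- p - s) / 2) + q = (s^+2 - (p^+2 - 4 * q))/4 by field.
    by rewrite hs subrr mul0r.
  have eq : q = ((- p + s) / 2) * ((- p - s) / 2).
    have -> : ((- p + s) / 2) * ((- p - s) / 2) = (p^+2 - s^+2)/4 by field.
    by rewrite hs; field.
  have ep : p = - (((- p + s) / 2) + ((- p - s) / 2)) by field.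
  move: a1 a2 b1 b2 eq ep.
  set r1 := (- p + s) / 2; set r2 := (- p - s) / 2 => a1 a2 b1 b2 eq ep.
  rewrite eq [in 1 + p]ep [in 1 - p]ep.
  split; [nra | split; nra].
set t := Num.sqrt (- (p^+2 - 4 * q)).
have ht : t^+2 = - (p^+2 - 4 * q) by rewrite sqr_sqrtr // oppr_ge0 ltW.
have := H (Complex (- p / 2) (t / 2)); rewrite norm_lt1 /= => Hz.
have : (- p / 2) ^+ 2 + (t / 2) ^+ 2 < 1.
  apply: Hz; apply: root_of_parts.
    have -> : (- p / 2) ^+ 2 - (t / 2) ^+ 2 + p * (- p / 2) + q = - (t^+2 + (p^+2 - 4 * q)) / 4 by field.
    by rewrite ht addNr oppr0 mul0r.
  by field.
move=> h.
have hq : (- p / 2) ^+ 2 + (t / 2) ^+ 2 = q.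
  have -> : (- p / 2) ^+ 2 + (t / 2) ^+ 2 = (p^+2 + t^+2)/4 by field.
  by rewrite ht; field.
rewrite hq in h.
split; first by [].
split; nra.
Qed.
Lemma charmx_eq n (K : 'M[R]_n) a b dt (z : R[i]) :
  dsr_charmx K a b dt z = ((z - 1)^+2)%:M +
    (z * real_complex R (a * b * dt) + z * real_complex R b - real_complex R b)
      *: map_mx (real_complex R) K.
Proof.
apply/matrixP => i j; rewrite /dsr_charmx !mxE.
case: (i == j); rewrite ?mulr1n ?mulr0n; ring.
Qed.
Lemma mul_charmx n (K : 'M[R]_n) a b dt (z : R[i]) (v : 'rV_n) :
  v *m dsr_charmx K a b dt z = (z - 1)^+2 *: v +
    (z * real_complex R (a * b * dt) + z * real_complex R b - real_complex R b)
      *: (v *m map_mx (real_complex R) K).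
Proof.
by rewrite charmx_eq mulmxDr mul_mx_scalar scalemxAr.
Qed.
Lemma sym_real n (K : 'M[R]_n) (v : 'rV[R[i]]_n) (mu : R[i]) :
  K^T = K -> v != 0 -> v *m map_mx (real_complex R) K = mu *: v ->
  conjc mu = mu.
Proof.
move=> hK vn0 hv.
set Kc := map_mx (real_complex R) K.
set w := map_mx (@conjc R) v.
have hKc : map_mx (@conjc R) Kc = Kc.
  by apply/matrixP => i j; rewrite !mxE conjc_real.
have hKcT : Kc^T = Kc by rewrite /Kc map_trmx hK.
have hw : w *m Kc = conjc mu *: w.
  by rewrite -hKc -map_mxM hv map_mxZ.
set N := v *m w^T.
have t11 : forall M : 'M[R[i]]_1, M^T = M.
  by move=> M; apply/matrixP => i j; rewrite !ord1 mxE.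
have hS : v *m Kc *m w^T = mu *: N by rewrite hv -scalemxAl.
have hS' : (v *m Kc *m w^T)^T = conjc mu *: N.
  by rewrite !trmx_mul trmxK hKcT mulmxA hw -scalemxAl -[w *m v^T]trmxK trmx_mul trmxK t11.
rewrite t11 hS in hS'.
have N0 : N 0 0 != 0.
  rewrite /N mxE.
  apply/negP => /eqP hsum.
  move: vn0; rewrite -[v]/(v) => /negP; apply; apply/eqP/matrixP => i j.
  rewrite ord1 mxE.
  have hpos : forall k, xpredT k -> 0 <= v 0 k * w^T k 0.
    by move=> k _; rewrite !mxE mulcJ_ge0.
  have := @psumr_eq0P _ _ xpredT _ hpos hsum j isT.
  rewrite !mxE => /eqP; rewrite mulf_eq0 conjc_eq0 orbb => /eqP.
  by [].
have := congr1 (fun M : 'M[R[i]]_1 => M 0 0) hS'; rewrite /= !mxE => /eqP.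
move: N0; rewrite /N mxE => N0. by rewrite -subr_eq0 -mulrBl mulf_eq0 (negPf N0) orbF subr_eq0 => /eqP.
Qed.
Lemma conj_real (x : R[i]) : conjc x = x -> x = real_complex R (complex.Re x).
Proof.
case: x => a b /= /eqP; rewrite eq_complex /= eqxx /= => /eqP h.
have -> : b = 0 by lra.
by [].
Qed.
Lemma real_eig n (K : 'M[R]_n) (v : 'rV[R[i]]_n) r :
  v != 0 -> v *m map_mx (real_complex R) K = real_complex R r *: v -> eigenvalue K r.
Proof.
move=> vn0 hv.
have : eigenvalue (map_mx (real_complex R) K) (real_complex R r).
  by apply/eigenvalueP; exists v.
by rewrite eigenvalue_root_char -map_char_poly fmorph_root -eigenvalue_root_char.
Qed.
Lemma scal_id (a b dt r : R) (z : R[i]) :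
  (z - 1)^+2 + (z * real_complex R (a * b * dt) + z * real_complex R b - real_complex R b) * real_complex R r
  = z^+2 + real_complex R (- (2 - b * r * (a * dt + 1))) * z + real_complex R (1 - b * r).
Proof.
rewrite !(rmorphB, rmorphD, rmorphM, rmorphN, rmorph1, rmorph_nat); ring.
Qed.
End S.

Theorem lemma1 (R : rcfType) (n : nat) (K : 'M[R]_n) (B : 'cV[R]_n)
  (alpha beta dt lmax : R) :
  (0 < n)%N ->
  0 < dt ->
  K^T = K ->
  (forall a : R, eigenvalue K a -> 0 < a) ->
  eigenvalue K lmax ->
  (forall a : R, eigenvalue K a -> a <= lmax) ->
  dsr_stable K alpha beta dt <->
  (0 < alpha /\ 0 < beta /\ beta < 4 / (lmax * (alpha * dt + 2))).
Proof.
move=> _ hdt hK hpos hl hmax.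
have hl0 := hpos _ hl.
split.
- move=> Hst.
  have [v hv vn0] := eigenvalueP hl.
  set vc := map_mx (real_complex R) v.
  have vcn0 : vc != 0 by rewrite map_mx_eq0.
  have hvc : vc *m map_mx (real_complex R) K = real_complex R lmax *: vc.
    by rewrite -map_mxM hv map_mxZ.
  have Hz : forall z : R[i], z^+2 + real_complex R (- (2 - beta * lmax * (alpha * dt + 1))) * z
      + real_complex R (1 - beta * lmax) = 0 -> `|z| < 1.
    move=> z hz; apply: Hst; apply/eqP/det0P; exists vc => //.
    by rewrite mul_charmx hvc scalerA -scalerDl scal_id hz scale0r.
  have [h1 [h2 h3]] := @jury_nec R _ _ Hz.
  have hb : 0 < beta by nra.
  have ha : 0 < alpha * dt by nra.
  split; first by rewrite -(pmulr_lgt0 _ hdt).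
  split; first by [].
  rewrite ltr_pdivlMr; last by nra.
  nra.
- move=> [ha [hb hbl]] z /eqP /det0P [v vn0 hv].
  rewrite mul_charmx in hv.
  set c := z * real_complex R (alpha * beta * dt) + z * real_complex R beta - real_complex R beta in hv.
  have cn0 : c != 0.
    apply/negP => /eqP c0.
    move: hv; rewrite c0 scale0r addr0 => /eqP; rewrite scaler_eq0 (negPf vn0) orbF expf_eq0 /= subr_eq0.
    move=> /eqP z1; move: c0; rewrite /c z1 !mul1r addrK => /eqP.
    rewrite (inj_eq (@complexI R)) => /eqP h0; have := mulr_gt0 (mulr_gt0 ha hb) hdt; by rewrite h0 ltxx.
  set mu := - (z - 1)^+2 / c.
  have hmu : v *m map_mx (real_complex R) K = mu *: v.
    set X := v *m map_mx (real_complex R) K in hv *.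
    have hX : c *: X = - ((z - 1)^+2 *: v) by apply/eqP; rewrite -addr_eq0 addrC hv.
    rewrite -[X]scale1r -(mulVf cn0) -scalerA hX scalerN scalerA -scaleNr.
    by congr (_ *: _); rewrite /mu; ring.
  have hmur := @conj_real R _ (@sym_real R _ _ _ _ hK vn0 hmu).
  set r := complex.Re mu in hmur.
  rewrite hmur in hmu.
  have her := @real_eig R _ _ _ _ vn0 hmu.
  have hr0 := hpos _ her.
  have hrl := hmax _ her.
  apply: (@jury_suff R (- (2 - beta * r * (alpha * dt + 1))) (1 - beta * r)).
  + nra.
  + have := mulr_gt0 (mulr_gt0 hb hr0) (mulr_gt0 ha hdt); nra.
  + have had := mulr_gt0 ha hdt.
    move: hbl; rewrite ltr_pdivlMr; last by apply: mulr_gt0 => //; lra.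
    have : 0 <= (lmax - r) * (beta * (alpha * dt + 2)).
      by apply: mulr_ge0; [lra | apply: mulr_ge0; lra].
    nra.
  + rewrite -scal_id -hmur /mu mulrC divfK //; exact: subrr.
Qed.
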